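(* Let $\mathcal{X}\in\mathbb{K}_l^{m\times n}$ and $\mathcal{Y}\in\mathbb{K}_l^{n\times p}$ be fixed tubal matrices, let $\tau\ge 1$, and let $\mathcal{S}\in\mathbb{K}_l^{n\times\tau}$, $\mathcal{D}\in\mathbb{K}_l^{\tau\times\tau}$ be the random sampling and rescaling tubal matrices generated from a probability distribution $\{\pi_i\}_{i=1}^n$ (with $\pi_i>0$) as described in the context. Suppose that for some $\beta\in(0,1]$ either $$\pi_i\ \ge\ \beta\,\frac{\|\mathcal{X}_{(:,i,:)}\|_F\,\|\mathcal{Y}_{(i,:,:)}\|_F}{\sum_{j=1}^n\|\mathcal{X}_{(:,j,:)}\|_F\,\|\mathcal{Y}_{(j,:,:)}\|_F}\quad\text{for all } i\in[n],$$ or $$\pi_i\ \ge\ \beta\,\frac{\|\mathcal{X}_{(:,i,:)}\|_F^2}{\|\mathcal{X}\|_F^2}\quad\text{for all } i\in[n].$$ Then $$\mathbf{E}\big[\|\mathcal{X}*\mathcal{Y}-\mathcal{X}*\mathcal{S}*\mathcal{D}*\mathcal{D}*\mathcal{S}^{T}*\mathcal{Y}\|_F^2\big]\ \le\ \frac{l}{\beta\tau}\,\|\mathcal{X}\|_F^2\,\|\mathcal{Y}\|_F^2 .$$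
   Context: $\mathbb{K}_l^{n\times p}$ denotes $\mathbb{R}^{n\times p\times l}$ (third-order tensors, called tubal matrices); $\mathcal{X}_{(k)}=\mathcal{X}_{(:,:,k)}$ is the $k$-th frontal slice, and Matlab-style indexing is used for fibers and slices (e.g. $\mathcal{X}_{(:,i,:)}$ is the $i$-th lateral slice, $\mathcal{Y}_{(i,:,:)}$ the $i$-th horizontal slice). The t-product of $\mathcal{A}\in\mathbb{K}_l^{n\times p}$ and $\mathcal{B}\in\mathbb{K}_l^{p\times r}$ is $\mathcal{A}*\mathcal{B}=\mathrm{fold}(\mathrm{bcirc}(\mathcal{A})\,\mathrm{unfold}(\mathcal{B}))\in\mathbb{K}_l^{n\times r}$, where $\mathrm{bcirc}(\mathcal{A})$ is the $nl\times pl$ block-circulant matrix whose first block column is $(\mathcal{A}_{(1)};\mathcal{A}_{(2)};\dots;\mathcal{A}_{(l)})$ (block $(i,j)$ equals $\mathcal{A}_{((i-j \bmod l)+1)}$), $\mathrm{unfold}(\mathcal{B})=(\mathcal{B}_{(1)};\dots;\mathcal{B}_{(l)})$ stacked vertically, and $\mathrm{fold}$ inverts $\mathrm{unfold}$. The transpose $\mathcal{A}^T\in\mathbb{K}_l^{p\times n}$ has $(\mathcal{A}^T)_{(1)}=\mathcal{A}_{(1)}^T$ and $(\mathcal{A}^T)_{(k)}=\mathcal{A}_{(l-k+2)}^T$ for $k=2,\dots,l$. $\|\cdot\|_F$ is the square root of the sum of squares of all entries. Sampling construction: given a probability distribution $\{\pi_i\}_{i=1}^n$ on $[n]=\{1,\dots,n\}$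 and an integer $\tau$, draw indices $i_1,\dots,i_\tau\in[n]$ independently with $\mathbf{P}(i_t=i)=\pi_i$ (sampling with replacement); $\mathcal{S}\in\mathbb{K}_l^{n\times\tau}$ has $\mathcal{S}_{(i_t,t,1)}=1$ for $t=1,\dots,\tau$ and all other entries zero; $\mathcal{D}\in\mathbb{K}_l^{\tau\times\tau}$ has $\mathcal{D}_{(t,t,1)}=1/\sqrt{\tau\pi_{i_t}}$ for $t=1,\dots,\tau$ and all other entries zero. *)

(* Defs.v *)
From HB Require Import structures.
From mathcomp Require Import all_boot all_order all_algebra.
From mathcomp Require Import reals.
Set Implicit Arguments. Unset Strict Implicit. Unset Printing Implicit Defensive.
Import Order.TTheory GRing.Theory Num.Theory.
Local Open Scope ring_scope.

(* A tubal matrix in K_l^{m x n} = R^{m x n x l}, given by its l frontal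
   slices: X k = X_(:,:,k+1)  (0-based slice index k : 'I_l). *)
Definition tubal (R : Type) (l m n : nat) := 'I_l -> 'M[R]_(m, n).

Lemma ord_pos l (k : 'I_l) : (0 < l)%N.
Proof. exact: leq_ltn_trans (leq0n k) (ltn_ord k). Qed.

Definition ord_subm l (k j : 'I_l) : 'I_l :=
  Ordinal (ltn_pmod (k + l - j) (ord_pos k)).

Definition ord_negm l (k : 'I_l) : 'I_l :=
  Ordinal (ltn_pmod (l - k) (ord_pos k)).

Section Tubal.
Variable R : realType.

(* t-product: fold(bcirc(A) unfold(B)); block (i,j) of bcirc(A) is
   A_((i-j mod l)+1), so the k-th frontal slice of the result is
   sum_j A_((k-j) mod l) B_j. *)
Definition tprod l n p r (A : tubal R l n p) (B : tubal R l p r) : tubal R l n r :=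
  fun k => \sum_(j < l) (A (ord_subm k j) *m B j).

(* transpose: (A^T)_(1) = A_(1)^T, (A^T)_(k) = A_(l-k+2)^T (1-based). *)
Definition ttr l n p (A : tubal R l n p) : tubal R l p n :=
  fun k => (A (ord_negm k))^T.

Definition tsub l n p (A B : tubal R l n p) : tubal R l n p :=
  fun k => A k - B k.

Definition frob2 l n p (A : tubal R l n p) : R :=
  \sum_(k < l) \sum_(i < n) \sum_(j < p) (A k i j) ^+ 2.
Definition frob l n p (A : tubal R l n p) : R := Num.sqrt (frob2 A).

Definition lat_slice l m n (X : tubal R l m n) (i : 'I_n) : tubal R l m 1 :=
  fun k => col i (X k).
Definition hor_slice l n p (Y : tubal R l n p) (i : 'I_n) : tubal R l 1 p :=
  fun k => row i (Y k).

Definition is_first l (k : 'I_l) : bool := (k == 0 :> nat).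

Definition sampS l n tau (idx : {ffun 'I_tau -> 'I_n}) : tubal R l n tau :=
  fun k => \matrix_(i < n, t < tau)
             (if is_first k && (i == idx t) then 1 else 0).

Definition sampD l n tau (pi : 'I_n -> R) (idx : {ffun 'I_tau -> 'I_n})
  : tubal R l tau tau :=
  fun k => \matrix_(s < tau, t < tau)
             (if is_first k && (s == t)
              then (Num.sqrt (tau%:R * pi (idx t)))^-1 else 0).

(* expectation over i_1,...,i_tau drawn i.i.d. with P(i_t = i) = pi i *)
Definition sampE n tau (pi : 'I_n -> R) (F : {ffun 'I_tau -> 'I_n} -> R) : R :=
  \sum_(idx : {ffun 'I_tau -> 'I_n}) (\prod_(t < tau) pi (idx t)) * F idx.


End Tubal.
Arguments sampS {R l n tau} idx _.

(* Main.v *)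
Require Import Defs.
From HB Require Import structures.
From mathcomp Require Import all_boot all_order all_algebra.
From mathcomp Require Import reals.
From mathcomp Require Import ring lra zify.
Import Order.TTheory GRing.Theory Num.Theory.
Local Open Scope ring_scope.

Set Implicit Arguments. Unset Strict Implicit. Unset Printing Implicit Defensive.


Section Prob.
Variable R : realType.
Variables (n tau : nat) (pi : 'I_n -> R).
Hypothesis pi1 : \sum_(i < n) pi i = 1.

Lemma sampE_sum (I : finType) (F : I -> {ffun 'I_tau -> 'I_n} -> R) :
  sampE pi (fun idx => \sum_(k : I) F k idx) = \sum_k sampE pi (F k).
Proof.
rewrite /sampE; under eq_bigr do rewrite mulr_sumr; exact: exchange_big.
Qed.

Lemma sampE_add (F G : {ffun 'I_tau -> 'I_n} -> R) : sampE pi (fun idx => F idx + G idx) = sampE pi F + sampE pi G.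
Proof. by rewrite /sampE -big_split; apply: eq_bigr => i _; rewrite mulrDr. Qed.

Lemma sampE_scale c (F : {ffun 'I_tau -> 'I_n} -> R) : sampE pi (fun idx => c * F idx) = c * sampE pi F.
Proof. by rewrite /sampE mulr_sumr; apply: eq_bigr => i _; rewrite mulrCA. Qed.

Lemma sampE_pair (h h' : 'I_n -> R) (s u : 'I_tau) :
  sampE pi (fun idx => h (idx s) * h' (idx u)) =
  if s == u then \sum_i pi i * h i * h' i
  else (\sum_i pi i * h i) * (\sum_i pi i * h' i).
Proof.
pose G t i := pi i * (if t == s then h i else 1) * (if t == u then h' i else 1).
rewrite /sampE.
transitivity (\sum_(idx : {ffun 'I_tau -> 'I_n}) \prod_t G t (idx t)).
  apply: eq_bigr => idx _; rewrite /G !big_split /=.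
  rewrite -!big_mkcond /= !big_pred1_eq mulrA //.
rewrite -bigA_distr_bigA /=.
have H1 t : t != s -> t != u -> \sum_i G t i = 1.
  by move=> /negbTE ts /negbTE tu; rewrite -pi1; apply: eq_bigr => i _; rewrite /G ts tu !mulr1.
case: (eqVneq s u) => [esu|su].
  rewrite [LHS](bigD1 (F:=fun t => \sum_(j<n) G t j) s) //= [X in _ * X]big1 ?mulr1; last by move=> t ts; apply: H1 => //; rewrite -esu.
  by apply: eq_bigr => i _; rewrite /G -esu eqxx.
rewrite [LHS](bigD1 (F:=fun t => \sum_(j<n) G t j) s) //= (bigD1 (F:=fun t => \sum_(j<n) G t j) u) 1?eq_sym //= [X in _ * (_ * X)]big1 ?mulr1; last first.
  by move=> t /andP[ts tu]; apply: H1.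
congr (_ * _); apply: eq_bigr => i _; rewrite /G eqxx.
  by rewrite (negbTE su) mulr1.
by rewrite eq_sym (negbTE su) mulr1.
Qed.

Lemma sampE_const c : sampE pi (fun _ : {ffun 'I_tau -> 'I_n} => c) = c.
Proof.
rewrite /sampE -mulr_suml -(bigA_distr_bigA (fun (_ : 'I_tau) (j : 'I_n) => pi j)) /=.
by rewrite big1 ?mul1r // => t _.
Qed.


Lemma sampE_one (h : 'I_n -> R) (s : 'I_tau) :
  sampE pi (fun idx => h (idx s)) = \sum_i pi i * h i.
Proof.
transitivity (sampE pi (fun idx => h (idx s) * (fun _ => 1) (idx s))).
  by rewrite /sampE; apply: eq_bigr => idx _; rewrite mulr1.
by rewrite (sampE_pair h (fun _ => 1) s s) eqxx; apply: eq_bigr => i _; rewrite mulr1.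
Qed.

Hypothesis tau0 : (0 < tau)%N.

Lemma sampE_var (f : 'I_n -> R) :
  sampE pi (fun idx : {ffun 'I_tau -> 'I_n} => (\sum_i pi i * f i - tau%:R^-1 * \sum_t f (idx t))^+2)
  = tau%:R^-1 * (\sum_i pi i * f i ^+ 2 - (\sum_i pi i * f i)^+2).
Proof.
set mu := \sum_i pi i * f i; set V := \sum_i pi i * f i ^+ 2.
set c := tau%:R^-1.
transitivity (sampE pi (fun idx : {ffun 'I_tau -> 'I_n} => mu^+2 + ((-(2*mu*c)) * \sum_t f (idx t)
   + c^+2 * \sum_s \sum_u f (idx s) * f (idx u)))).
  rewrite /sampE; apply: eq_bigr => idx _; congr (_ * _).
  have -> : \sum_s \sum_u f (idx s) * f (idx u) = (\sum_t f (idx t))^+2.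
    by rewrite expr2 mulr_suml; apply: eq_bigr => s _; rewrite mulr_sumr.
  ring.
rewrite sampE_add sampE_const sampE_add !sampE_scale !sampE_sum.
under eq_bigr do rewrite sampE_one.
have E1 s : \sum_(u < tau) (if s == u then V else mu * mu) = V - mu^+2 + mu^+2 *+ tau.
  transitivity (\sum_(u < tau) (mu^+2 + (s == u)%:R * (V - mu^+2))).
    by apply: eq_bigr => u _; case: eqP => _; rewrite ?mul1r ?mul0r ?addr0 ?expr2 // addrC subrK.
  rewrite big_split /= sumr_const card_ord addrC; congr (_ + _).
  rewrite (bigD1 s) //= eqxx mul1r big1 ?addr0 // => u /negbTE us.
  by rewrite eq_sym us mul0r.
have E2 : \sum_(s < tau) sampE pi (fun idx : {ffun 'I_tau -> 'I_n} => \sum_(u < tau) f (idx s) * f (idx u))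
    = (V - mu^+2 + mu^+2 *+ tau) *+ tau.
  transitivity (\sum_(s < tau) (V - mu^+2 + mu^+2 *+ tau)); last first.
    by rewrite sumr_const card_ord.
  apply: eq_bigr => s _; rewrite sampE_sum -(E1 s); apply: eq_bigr => u _.
  rewrite (sampE_pair f f s u); case: eqP => // _.
  by rewrite /V; apply: eq_bigr => i _; rewrite expr2 mulrA.
rewrite E2 sumr_const card_ord.
have hn (x : R) : x *+ tau = x * tau%:R by rewrite mulr_natr.
rewrite (hn (V - _ + _)) (hn (mu ^+ 2)) -/mu (hn mu).
rewrite /c; field.
by rewrite pnatr_eq0 -lt0n.
Qed.

End Prob.


Section Tub.
Variable R : realType.
Variable l : nat.

Lemma ord_subm0 (k : 'I_l.+1) : ord_subm k ord0 = k.
Proof. apply/val_inj => /=; rewrite subn0 modnDr modn_small //. Qed.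

Lemma subm_val (k j : 'I_l.+1) :
  val (ord_subm k j) = if (j <= k)%N then (k - j)%N else (k + l.+1 - j)%N.
Proof.
rewrite /=; have := ltn_ord k; have := ltn_ord j; case: (leqP j k) => jk hj hk.
  have -> : (k + l.+1 - j = (k - j) + l.+1)%N by lia.
  by rewrite modnDr modn_small //; lia.
by rewrite modn_small //; lia.
Qed.

Lemma ord_subm_eq0 (k j : 'I_l.+1) : ord_subm k j = ord0 -> j = k.
Proof.
move=> /(congr1 val); rewrite subm_val /= => H; apply/val_inj => /=.
have := ltn_ord k; have := ltn_ord j; move: H; case: (leqP j k); lia.
Qed.

Lemma ord_subm_inj (k : 'I_l.+1) : injective (ord_subm k).
Proof.
move=> j j' /(congr1 val); rewrite !subm_val => H; apply/val_inj => /=.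
have := ltn_ord k; have := ltn_ord j; have := ltn_ord j'; move: H.
by case: (leqP j k); case: (leqP j' k); lia.
Qed.

Lemma ord_negm_eq0 (k : 'I_l.+1) : (ord_negm k == ord0) = (k == ord0).
Proof.
apply/eqP/eqP => [/(congr1 val) /= H|->]; apply/val_inj => /=.
  have := ltn_ord k; move: H; case: (posnP k) => [->|kp] hk.
    by [].
  move=> hk2; move: hk; rewrite modn_small; lia.
by change ((l.+1 - 0) %% l.+1 = 0)%N; rewrite subn0 modnn.
Qed.

Lemma tprodr0 m n p (A : tubal R l.+1 m n) (B : tubal R l.+1 n p) k :
  (forall j, j != ord0 -> B j = 0) -> tprod A B k = A k *m B ord0.
Proof.
move=> HB; rewrite /tprod (bigD1 ord0) //= big1 ?addr0 ?ord_subm0 // => j /HB ->.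
by rewrite mulmx0.
Qed.

Lemma tprodl0 m n p (A : tubal R l.+1 m n) (B : tubal R l.+1 n p) k :
  (forall j, j != ord0 -> A j = 0) -> tprod A B k = A ord0 *m B k.
Proof.
move=> HA; rewrite /tprod (bigD1 k) //= big1 ?addr0.
  by congr (A _ *m _); apply/val_inj; rewrite subm_val leqnn subnn.
move=> j jk; rewrite HA ?mul0mx //; apply/eqP => /ord_subm_eq0 E.
by rewrite E eqxx in jk.
Qed.


Section Samp.
Variables (n tau : nat) (pi : 'I_n -> R) (idx : {ffun 'I_tau -> 'I_n}).

Definition S0 : 'M[R]_(n, tau) := \matrix_(i, t) (if i == idx t then 1 else 0).
Definition dd (t : 'I_tau) : R := (Num.sqrt (tau%:R * pi (idx t)))^-1.
Definition D0 : 'M[R]_(tau, tau) := \matrix_(s, t) (if s == t then dd t else 0).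

Lemma sampS_E k : sampS (R:=R) (l:=l.+1) idx k = if k == ord0 then S0 else 0.
Proof.
by apply/matrixP => i t; rewrite /sampS /is_first; case: ifP => hk; rewrite !mxE /= (_ : (k == 0 :> nat) = (k == ord0)) // hk.
Qed.

Lemma sampD_E k : sampD (l:=l.+1) pi idx k = if k == ord0 then D0 else 0.
Proof.
by apply/matrixP => i t; rewrite /sampD /is_first; case: ifP => hk; rewrite !mxE /= (_ : (k == 0 :> nat) = (k == ord0)) // hk.
Qed.

Lemma ttrS_E k : ttr (sampS (R:=R) (l:=l.+1) idx) k = if k == ord0 then S0^T else 0.
Proof.
rewrite /ttr sampS_E ord_negm_eq0; case: ifP => // _; exact: trmx0.
Qed.

Lemma mulS_E m (A : 'M[R]_(m, n)) r t : (A *m S0) r t = A r (idx t).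
Proof.
rewrite mxE (bigD1 (idx t)) //= big1 ?addr0; first by rewrite mxE eqxx mulr1.
by move=> i /negbTE hi; rewrite mxE hi mulr0.
Qed.

Lemma mulD_E m (A : 'M[R]_(m, tau)) r t : (A *m D0) r t = A r t * dd t.
Proof.
rewrite mxE (bigD1 t) //= big1 ?addr0; first by rewrite mxE eqxx.
by move=> i /negbTE hi; rewrite mxE hi mulr0.
Qed.

Lemma mulSt_E p (B : 'M[R]_(n, p)) t c : (S0^T *m B) t c = B (idx t) c.
Proof.
rewrite mxE (bigD1 (idx t)) //= big1 ?addr0; first by rewrite !mxE eqxx mul1r.
by move=> i /negbTE hi; rewrite !mxE hi mul0r.
Qed.


Hypothesis pipos : forall i, 0 < pi i.

Lemma dd2 t : dd t * dd t = (tau%:R * pi (idx t))^-1.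
Proof.
by rewrite /dd -invfM -expr2 sqr_sqrtr // mulr_ge0 // ?ler0n // ltW.
Qed.

Definition gg m p (X : tubal R l.+1 m n) (Y : tubal R l.+1 n p) k r c i :=
  (\sum_j X (ord_subm k j) r i * Y j i c) / pi i.

Lemma entry m p (X : tubal R l.+1 m n) (Y : tubal R l.+1 n p) k r c :
 tsub (tprod X Y) (tprod (tprod (tprod (tprod X (sampS (R:=R) (l:=l.+1) idx))
   (sampD (l:=l.+1) pi idx)) (sampD (l:=l.+1) pi idx))
   (tprod (ttr (sampS (R:=R) (l:=l.+1) idx)) Y)) k r c
 = \sum_i pi i * gg X Y k r c i - tau%:R^-1 * \sum_t gg X Y k r c (idx t).
Proof.
have hsub (A B : 'M[R]_(m, p)) : (A - B) r c = A r c - B r c by rewrite !mxE.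
rewrite /tsub hsub; congr (_ - _).
  rewrite /tprod summxE; under eq_bigr do rewrite mxE.
  rewrite exchange_big; apply: eq_bigr => i _.
  by rewrite /gg mulrC divfK // lt0r_neq0.
have EB j : tprod (ttr (sampS (R:=R) (l:=l.+1) idx)) Y j = S0^T *m Y j.
  by rewrite tprodl0 ?ttrS_E ?eqxx // => j' /negbTE hj; rewrite ttrS_E hj.
have ED j : j != ord0 -> sampD (l:=l.+1) pi idx j = 0.
  by move=> /negbTE hj; rewrite sampD_E hj.
have ES j : j != ord0 -> sampS (R:=R) (l:=l.+1) idx j = 0.
  by move=> /negbTE hj; rewrite sampS_E hj.
have EA j : tprod (tprod (tprod X (sampS (R:=R) (l:=l.+1) idx))
   (sampD (l:=l.+1) pi idx)) (sampD (l:=l.+1) pi idx) j = X j *m S0 *m D0 *m D0.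
  by rewrite tprodr0 // tprodr0 // tprodr0 // sampD_E sampS_E eqxx.
transitivity ((\sum_j (X (ord_subm k j) *m S0 *m D0 *m D0) *m (S0^T *m Y j)) r c).
  by apply: (congr1 (fun M : 'M[R]_(m, p) => M r c)); apply: eq_bigr => j _; rewrite EA EB.
rewrite summxE; under eq_bigr do rewrite mxE.
under eq_bigr do under eq_bigr do rewrite !mulD_E mulS_E mulSt_E.
rewrite exchange_big mulr_sumr; apply: eq_bigr => t _.
rewrite /gg mulr_suml mulr_sumr; apply: eq_bigr => j _.
rewrite -[X (ord_subm k j) r (idx t) * dd t * dd t]mulrA dd2 invfM; ring.
Qed.

End Samp.

End Tub.


Section An.
Variable R : realType.

Lemma CS (I : finType) (a b : I -> R) :
  (\sum_i a i * b i)^+2 <= (\sum_i a i ^+ 2) * (\sum_i b i ^+ 2).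
Proof.
have E1 : (\sum_i a i * b i)^+2 = \sum_i \sum_j (a i * b i) * (a j * b j).
  by rewrite expr2 mulr_suml; apply: eq_bigr => i _; rewrite mulr_sumr.
have E2 : (\sum_i a i ^+ 2) * (\sum_i b i ^+ 2) = \sum_i \sum_j a i ^+ 2 * b j ^+ 2.
  by rewrite mulr_suml; apply: eq_bigr => i _; rewrite mulr_sumr.
have E3 : (\sum_i a i ^+ 2) * (\sum_i b i ^+ 2) = \sum_i \sum_j b i ^+ 2 * a j ^+ 2.
  by rewrite mulrC mulr_suml; apply: eq_bigr => i _; rewrite mulr_sumr.
suff : 2 * (\sum_i a i * b i)^+2 <= 2 * ((\sum_i a i ^+ 2) * (\sum_i b i ^+ 2)).
  by rewrite ler_pM2l.
have -> : 2 * ((\sum_i a i ^+ 2) * (\sum_i b i ^+ 2)) =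
   \sum_i \sum_j a i ^+ 2 * b j ^+ 2 + \sum_i \sum_j b i ^+ 2 * a j ^+ 2.
  by rewrite -E2 -E3; ring.
rewrite E1 mulr_sumr -big_split /=; apply: ler_sum => i _.
rewrite mulr_sumr -big_split /=; apply: ler_sum => j _.
have h := sqr_ge0 (a i * b j - a j * b i); nra.
Qed.

Variable l : nat.

Lemma frob2_lat m n (X : tubal R l m n) i :
  frob2 (lat_slice X i) = \sum_k \sum_r (X k r i)^+2.
Proof.
by apply: eq_bigr => k _; apply: eq_bigr => r _; rewrite big_ord1 mxE.
Qed.

Lemma frob2_hor n p (Y : tubal R l n p) i :
  frob2 (hor_slice Y i) = \sum_k \sum_c (Y k i c)^+2.
Proof.
by apply: eq_bigr => k _; rewrite big_ord1; apply: eq_bigr => c _; rewrite mxE.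
Qed.

Lemma frob2_X m n (X : tubal R l m n) :
  frob2 X = \sum_i frob2 (lat_slice X i).
Proof.
under [RHS]eq_bigr do rewrite frob2_lat.
rewrite exchange_big; apply: eq_bigr => k _; rewrite exchange_big.
by apply: eq_bigr.
Qed.

Lemma frob2_Y n p (Y : tubal R l n p) :
  frob2 Y = \sum_i frob2 (hor_slice Y i).
Proof.
under [RHS]eq_bigr do rewrite frob2_hor.
by rewrite exchange_big.
Qed.

End An.

Lemma conv_bound (R : realType) l m n p (X : tubal R l.+1 m n) (Y : tubal R l.+1 n p) i :
  \sum_k \sum_r \sum_c (\sum_j X (ord_subm k j) r i * Y j i c)^+2
   <= l.+1%:R * frob2 (lat_slice X i) * frob2 (hor_slice Y i).
Proof.
rewrite -mulrA.
have -> : l.+1%:R * (frob2 (lat_slice X i) * frob2 (hor_slice Y i)) =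
  \sum_(k < l.+1) (frob2 (lat_slice X i) * frob2 (hor_slice Y i)).
  by rewrite sumr_const card_ord mulr_natl.
rewrite frob2_lat frob2_hor.
apply: ler_sum => k _.
apply: le_trans (_ : \sum_r \sum_c ((\sum_j X (ord_subm k j) r i ^+ 2) *
    (\sum_j Y j i c ^+ 2)) <= _).
  by apply: ler_sum => r _; apply: ler_sum => c _; apply: CS.
rewrite le_eqVlt; apply/orP; left; apply/eqP.
under eq_bigr do rewrite -mulr_sumr.
rewrite -mulr_suml [X in _ * X]exchange_big; congr (_ * _).
rewrite exchange_big [RHS](reindex_inj (@ord_subm_inj l k)) /=.
by [].
Qed.

Lemma weight_bound (R : realType) n (pi : 'I_n -> R) beta (A2 B2 : 'I_n -> R) :
  (forall i, 0 <= A2 i) -> (forall i, 0 <= B2 i) -> (forall i, 0 < pi i) -> 0 < beta ->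
  ((forall i, beta * (Num.sqrt (A2 i) * Num.sqrt (B2 i))
      / (\sum_j Num.sqrt (A2 j) * Num.sqrt (B2 j)) <= pi i)
   \/ (forall i, beta * A2 i / (\sum_j A2 j) <= pi i)) ->
  \sum_i A2 i * B2 i / pi i <= (\sum_i A2 i) * (\sum_i B2 i) / beta.
Proof.
move=> hA hB hpi hb [] H.
  pose c i := Num.sqrt (A2 i) * Num.sqrt (B2 i).
  pose s := \sum_j c j.
  have c0 i : 0 <= c i by rewrite mulr_ge0 ?sqrtr_ge0.
  have c2 i : A2 i * B2 i = c i ^+ 2 by rewrite exprMn !sqr_sqrtr.
  have cs i : c i <= s by rewrite /s (bigD1 i) //= lerDl sumr_ge0.
  apply: le_trans (_ : \sum_i c i * s / beta <= _).
    apply: ler_sum => i _; rewrite c2.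
    have [ci0|cip] := eqVneq (c i) 0.
      by rewrite ci0 expr0n /= !mul0r.
    have cp : 0 < c i by rewrite lt0r cip c0.
    have sp : 0 < s by apply: lt_le_trans (cs i).
    have := H i; rewrite -/(c i) -/s ler_pdivrMr // => hi.
    rewrite ler_pdivrMr // mulrAC ler_pdivlMr //.
    nra.
  rewrite -!mulr_suml ler_pM2r ?invr_gt0 //.
  have h := CS (fun i => Num.sqrt (A2 i)) (fun i => Num.sqrt (B2 i)); simpl in h.
  have e1 : \sum_i Num.sqrt (A2 i) ^+ 2 = \sum_i A2 i.
    by apply: eq_bigr => i _; rewrite sqr_sqrtr.
  have e2 : \sum_i Num.sqrt (B2 i) ^+ 2 = \sum_i B2 i.
    by apply: eq_bigr => i _; rewrite sqr_sqrtr.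
  by rewrite e1 e2 -/s expr2 in h.
pose A := \sum_j A2 j.
apply: le_trans (_ : \sum_i A * B2 i / beta <= _); last first.
  by rewrite -mulr_suml -mulr_sumr.
apply: ler_sum => i _.
have [ai0|aip] := eqVneq (A2 i) 0.
  by rewrite ai0 !mul0r divr_ge0 ?mulr_ge0 ?sumr_ge0 // ltW.
have ap : 0 < A2 i by rewrite lt0r aip hA.
have Ap : 0 < A by apply: lt_le_trans ap _; rewrite /A (bigD1 i) //= lerDl sumr_ge0.
have := H i; rewrite -/A ler_pdivrMr // => hi.
rewrite ler_pdivrMr // mulrAC ler_pdivlMr //.
have := hB i; nra.
Qed.

Unset Implicit Arguments. Set Strict Implicit.


Theorem mainTheorem1 (R : realType) (l m n p tau : nat)
  (X : tubal R l m n) (Y : tubal R l n p) (pi : 'I_n -> R) (beta : R) :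
  (1 <= tau)%N ->
  (forall i, 0 < pi i) -> \sum_(i < n) pi i = 1 ->
  0 < beta -> beta <= 1 ->
  ((forall i : 'I_n,
      beta * (frob (lat_slice X i) * frob (hor_slice Y i))
        / (\sum_(j < n) frob (lat_slice X j) * frob (hor_slice Y j)) <= pi i)
   \/
   (forall i : 'I_n, beta * frob2 (lat_slice X i) / frob2 X <= pi i)) ->
  sampE pi (fun idx : {ffun 'I_tau -> 'I_n} =>
    frob2 (tsub (tprod X Y)
      (tprod (tprod (tprod (tprod X (sampS (R:=R) (l:=l) idx)) (sampD (l:=l) pi idx))
                    (sampD (l:=l) pi idx)) (tprod (ttr (sampS (R:=R) (l:=l) idx)) Y))))
  <= l%:R / (beta * tau%:R) * frob2 X * frob2 Y.
Proof.
move=> tau1 pipos pi1 bpos b1 hyp.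
case: l X Y hyp => [|l] X Y hyp.
  rewrite /sampE big1 ?mul0r ?mul0r // => idx _.
  by rewrite /frob2 big_ord0 mulr0.
have tau0 : tau%:R != 0 :> R by rewrite pnatr_eq0 -lt0n.
set gg' := gg pi X Y.
set LHS := (X in X <= _).
have -> : LHS = (sampE pi (fun idx : {ffun 'I_tau -> 'I_n} => \sum_k \sum_r \sum_c
   (\sum_i pi i * gg' k r c i - tau%:R^-1 * \sum_t gg' k r c (idx t))^+2)).
  rewrite /LHS /sampE; apply: eq_bigr => idx _; congr (_ * _).
  apply: eq_bigr => k _; apply: eq_bigr => r _; apply: eq_bigr => c _.
  by rewrite entry.
rewrite sampE_sum.
apply: le_trans (_ : \sum_k \sum_r \sum_c tau%:R^-1 * \sum_i pi i * gg' k r c i ^+ 2 <= _).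
  apply: ler_sum => k _; rewrite sampE_sum; apply: ler_sum => r _; rewrite sampE_sum.
  apply: ler_sum => c _.
  by rewrite (sampE_var pi1 tau1) ler_wpM2l ?invr_ge0 ?ler0n // lerBlDr lerDl sqr_ge0.
pose W i := \sum_k \sum_r \sum_c (\sum_j X (ord_subm k j) r i * Y j i c)^+2.
have E2 : \sum_k \sum_r \sum_c tau%:R^-1 * \sum_i pi i * gg' k r c i ^+ 2
    = tau%:R^-1 * \sum_i W i / pi i.
  transitivity (tau%:R^-1 * \sum_k \sum_r \sum_c \sum_i pi i * gg' k r c i ^+ 2).
    rewrite mulr_sumr; apply: eq_bigr => k _; rewrite mulr_sumr; apply: eq_bigr => r _.
    by rewrite mulr_sumr.
  congr (_ * _).
  have EWp i : W i / pi i = \sum_k \sum_r \sum_c (\sum_j X (ord_subm k j) r i * Y j i c)^+2 / pi i.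
    rewrite /W mulr_suml; apply: eq_bigr => k _; rewrite mulr_suml; apply: eq_bigr => r _.
    by rewrite mulr_suml.
  under [RHS]eq_bigr do rewrite EWp.
  rewrite [RHS]exchange_big; apply: eq_bigr => k _.
  rewrite [RHS]exchange_big; apply: eq_bigr => r _.
  rewrite [RHS]exchange_big; apply: eq_bigr => c _.
  apply: eq_bigr => i _; rewrite /gg' /gg.
  by field; rewrite lt0r_neq0.
rewrite E2.
apply: le_trans (_ : tau%:R^-1 * \sum_i l.+1%:R * frob2 (lat_slice X i) * frob2 (hor_slice Y i) / pi i <= _).
  rewrite ler_wpM2l ?invr_ge0 ?ler0n //; apply: ler_sum => i _.
  by rewrite ler_pM2r ?invr_gt0 //; rewrite /W; exact: conv_bound.
have EW : \sum_i l.+1%:R * frob2 (lat_slice X i) * frob2 (hor_slice Y i) / pi i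
   = l.+1%:R * \sum_i frob2 (lat_slice X i) * frob2 (hor_slice Y i) / pi i.
  by rewrite mulr_sumr; apply: eq_bigr => i _; rewrite !mulrA.
have f2ge0 a b (Z : tubal R l.+1 a b) : 0 <= frob2 Z.
  by rewrite /frob2 !sumr_ge0 // => ? _; rewrite !sumr_ge0 // => ? _; rewrite sumr_ge0 // => ? _; rewrite sqr_ge0.
rewrite EW.
apply: le_trans (_ : tau%:R^-1 * (l.+1%:R * ((\sum_i frob2 (lat_slice X i)) *
   (\sum_i frob2 (hor_slice Y i)) / beta)) <= _).
  rewrite ler_wpM2l ?invr_ge0 ?ler0n // ler_wpM2l ?ler0n //.
  apply: weight_bound => //; try (move=> i; exact: f2ge0). by move: hyp; rewrite /frob frob2_X.
rewrite -frob2_X -frob2_Y le_eqVlt; apply/orP; left; apply/eqP.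
by field; rewrite tau0 lt0r_neq0.
Qed.
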